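(* Let $n\ge1$, $s\in(0,1)$ with $n/s\ge2$, $\Omega\subset\mathbb R^n$ a bounded Lipschitz domain, $\mu\in(0,n)$, $M$ satisfying (M1)–(M3) and $g$ satisfying (g1)–(g4). Then any nontrivial weak solution $u\in X_0\setminus\{0\}$ of $$-M(\|u\|^{n/s})(-\Delta)^s_{n/s}u=\left(\int_\Omega\frac{G(y,u)}{|x-y|^\mu}dy\right)g(x,u)\ \text{in }\Omega,\quad u=0\ \text{in }\mathbb R^n\setminus\Omega$$ is nonnegative, i.e. $u\ge0$ a.e. in $\Omega$.
   Context: $X_0=\{u\in W^{s,n/s}(\mathbb R^n): u=0 \text{ in } \mathbb R^n\setminus\Omega\}$ with norm $\|u\|=\left(\int_{\mathbb R^n}\int_{\mathbb R^n}\frac{|u(x)-u(y)|^{n/s}}{|x-y|^{2n}}dxdy\right)^{s/n}$. A weak solution is $u\in X_0$ with $M(\|u\|^{n/s})\int_{\mathbb R^{2n}}\frac{|u(x)-u(y)|^{\frac ns-2}(u(x)-u(y))(\phi(x)-\phi(y))}{|x-y|^{2n}}dxdy=\int_\Omega\left(\int_\Omega\frac{G(y,u)}{|x-y|^\mu}dy\right)g(x,u)\phi\,dx$ for all $\phi\in X_0$. $M:\mathbb R^+\to\mathbb R^+$ continuous, $\hat M(t)=\int_0^tM$; $g(x,t)=h(x,t)\exp(|t|^{\frac n{n-s}})$ continuous, $G(x,t)=\int_0^tg(x,\tau)d\tau$. (M1) $\hat M(t+s)\ge\hat M(t)+\hat M(s)$. (M2) There is $\gamma>1$ with $M(t)/t^{\gamma-1}$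 nonincreasing for $t>0$. (M3) For each $b>0$ there is $\kappa(b)>0$ with $M(t)\ge\kappa$ for $t\ge b$. (g1) $h\in C^1(\overline\Omega\times\mathbb R)$, $h=0$ for $t\le0$, $h>0$ for $t>0$. (g2) For every $\varepsilon>0$, $\lim_{t\to\infty}\sup_xh(x,t)e^{-\varepsilon|t|^{\frac n{n-s}}}=0$, $\lim_{t\to\infty}\inf_xh(x,t)e^{\varepsilon|t|^{\frac n{n-s}}}=\infty$. (g3) There are positive $t_0,T_0,\gamma_0$ with $0<t^{\gamma_0}G(x,t)\le T_0g(x,t)$ on $\Omega\times[t_0,\infty)$. (g4) There is $l>\frac{\gamma n}{2s}-1$ with $g(x,t)/t^l$ increasing in $t>0$ uniformly in $x$. *)

(* Defs.v *)
From HB Require Import structures.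
From mathcomp Require Import all_boot all_order all_algebra.
From mathcomp Require Import all_classical all_reals all_analysis.
Set Implicit Arguments.
Unset Strict Implicit.
Unset Printing Implicit Defensive.
Import Order.TTheory GRing.Theory Num.Theory.
Import numFieldNormedType.Exports.
Local Open Scope classical_set_scope.
Local Open Scope ring_scope.

Section Defs.
Variable R : realType.

Definition edot n (x y : 'rV[R]_n) : R := \sum_(i < n) x ord0 i * y ord0 i.
(* Euclidean norm |x| (NOT the max-norm carried by 'rV in the library) *)
Definition enorm n (x : 'rV[R]_n) : R := Num.sqrt (edot x x).
Definition eball n (x0 : 'rV[R]_n) (r : R) : set 'rV[R]_n :=
  [set x | enorm (x - x0) < r].

Definition borelRn n (A : set 'rV[R]_n) : Prop :=
  <<s [set: 'rV[R]_n], [set U | open U] >> A.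
Definition borel_fun n (f : 'rV[R]_n -> R) : Prop :=
  forall B : set R, measurable B -> borelRn (f @^-1` B).

(* Iterated one-dimensional Lebesgue integrals; by Tonelli's theorem this is
   the n-dimensional Lebesgue integral of every nonnegative Borel function. *)
Fixpoint iint (n : nat) : ('rV[R]_n -> \bar R) -> \bar R :=
  match n return ('rV[R]_n -> \bar R) -> \bar R with
  | 0 => fun f => f 0
  | n'.+1 => fun f =>
      (\int[@lebesgue_measure R]_x
         iint (fun y : 'rV[R]_n' => f (row_mx (\row_(j < 1) x) y)))%E
  end.

Definition nnint n (f : 'rV[R]_n -> R) : \bar R :=
  iint (fun x => ((Num.max (f x) 0)%R)%:E).

(* real-valued integral over R^n of a signed function:
   int f^+ - int f^-, with the mathcomp convention of Rintegral
   (fine of the extended value) *)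
Definition rint n (f : 'rV[R]_n -> R) : R :=
  fine (nnint f - nnint (fun x => (- f x)%R))%E.

Definition nnint2 n (F : 'rV[R]_n -> 'rV[R]_n -> R) : \bar R :=
  nnint (fun z : 'rV[R]_(n + n) => F (lsubmx z) (rsubmx z)).
Definition rint2 n (F : 'rV[R]_n -> 'rV[R]_n -> R) : R :=
  rint (fun z : 'rV[R]_(n + n) => F (lsubmx z) (rsubmx z)).

Definition indR n (A : set 'rV[R]_n) (x : 'rV[R]_n) : R :=
  if `[< A x >] then 1 else 0.

Definition bounded_set n (O : set 'rV[R]_n) : Prop :=
  exists r : R, forall x, O x -> enorm x <= r.

(* Standard definition, written without choosing coordinates: near each
   boundary point x0 there is a unit vector e (the "vertical" direction of a
   rotated coordinate system) and a Lipschitz function gam on the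
   hyperplane e^perp such that O is locally the subgraph region
   { x : x.e < gam(P x) } where P x = x - (x.e) e is the orthogonal
   projection onto e^perp. *)
Definition lipschitz_boundary n (O : set 'rV[R]_n) : Prop :=
  forall x0, (closure O `\` O) x0 ->
  exists (r : R) (e : 'rV[R]_n) (gam : 'rV[R]_n -> R) (L : R),
    0 < r /\ enorm e = 1 /\
    (forall a b, edot a e = 0 -> edot b e = 0 ->
        `|gam a - gam b| <= L * enorm (a - b)) /\
    (forall x, eball x0 r x ->
        (O x <-> edot x e < gam (x - edot x e *: e))).

Definition bounded_lipschitz_domain n (O : set 'rV[R]_n) : Prop :=
  open O /\ connected O /\ O !=set0 /\ bounded_set O /\ lipschitz_boundary O.

Definition oint (f : R -> R) (a b : R) : R :=
  if a <= b then fine (\int[@lebesgue_measure R]_(x in `[a, b]) (f x)%:E)%E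
  else - fine (\int[@lebesgue_measure R]_(x in `[b, a]) (f x)%:E)%E.

Definition Mhat (M : R -> R) (t : R) : R := oint M 0 t.

Definition M_basic (M : R -> R) : Prop :=
  (forall t, 0 <= t -> 0 <= M t) /\
  {within `[0, +oo[%classic, continuous M}.
Definition M1 (M : R -> R) : Prop :=
  forall t s, 0 <= t -> 0 <= s -> Mhat M (t + s) >= Mhat M t + Mhat M s.
Definition M2 (M : R -> R) (gam : R) : Prop :=
  1 < gam /\ forall t1 t2, 0 < t1 -> t1 <= t2 ->
     M t2 / powR t2 (gam - 1) <= M t1 / powR t1 (gam - 1).
Definition M3 (M : R -> R) : Prop :=
  forall b, 0 < b -> exists kap : R, 0 < kap /\ forall t, b <= t -> kap <= M t.

Definition crit_exp (n : nat) (s : R) : R := n%:R / (n%:R - s).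

Definition gfun n (s : R) (h : 'rV[R]_n -> R -> R) (x : 'rV[R]_n) (t : R) : R :=
  h x t * expR (powR `|t| (crit_exp n s)).
Definition Gfun n (s : R) (h : 'rV[R]_n -> R -> R) (x : 'rV[R]_n) (t : R) : R :=
  oint (gfun s h x) 0 t.

(* h in C^1(closure O x R): h agrees on closure O x R with a function on
   R^n x R all of whose directional derivatives exist everywhere and are
   continuous (hence it is continuously differentiable). *)
Definition C1_on_closure n (O : set 'rV[R]_n) (h : 'rV[R]_n -> R -> R) : Prop :=
  exists H : 'rV[R]_n * R -> R,
    (forall x t, closure O x -> H (x, t) = h x t) /\
    (forall v p, derivable H p v) /\
    (forall v, continuous (fun p => ('D_v H p : R))).

Definition g1 n (O : set 'rV[R]_n) (h : 'rV[R]_n -> R -> R) : Prop :=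
  C1_on_closure O h /\
  (forall x t, closure O x -> t <= 0 -> h x t = 0) /\
  (forall x t, closure O x -> 0 < t -> 0 < h x t).

Definition g2 n (s : R) (O : set 'rV[R]_n) (h : 'rV[R]_n -> R -> R) : Prop :=
  forall eps : R, 0 < eps ->
   (forall eta : R, 0 < eta -> exists T : R, forall t x, T <= t -> O x ->
       h x t * expR (- (eps * powR `|t| (crit_exp n s)))  <= eta) /\
   (forall K : R, exists T : R, forall t x, T <= t -> O x ->
       K <= h x t * expR (eps * powR `|t| (crit_exp n s))).

Definition g3 n (s : R) (O : set 'rV[R]_n) (h : 'rV[R]_n -> R -> R) : Prop :=
  exists t0 T0 gam0 : R, 0 < t0 /\ 0 < T0 /\ 0 < gam0 /\
    forall x t, O x -> t0 <= t ->
      0 < powR t gam0 * Gfun s h x t /\ powR t gam0 * Gfun s h x t <= T0 * gfun s h x t.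

Definition g4 n (s : R) (O : set 'rV[R]_n) (h : 'rV[R]_n -> R -> R) (l : R) : Prop :=
  forall x t1 t2, O x -> 0 < t1 -> t1 < t2 ->
    gfun s h x t1 / powR t1 l < gfun s h x t2 / powR t2 l.

Definition pexp (n : nat) (s : R) : R := n%:R / s.

Definition gagliardo n (s : R) (u : 'rV[R]_n -> R) : \bar R :=
  nnint2 (fun x y => powR `|u x - u y| (pexp n s) / enorm (x - y) ^+ (2 * n)).

Definition X0 n (s : R) (O : set 'rV[R]_n) (u : 'rV[R]_n -> R) : Prop :=
  borel_fun u /\
  (forall x, ~ O x -> u x = 0) /\
  (nnint (fun x => powR `|u x| (pexp n s)) < +oo)%E /\
  (gagliardo s u < +oo)%E.

Definition X0norm n (s : R) (u : 'rV[R]_n -> R) : R :=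
  powR (fine (gagliardo s u)) (s / n%:R).

Definition weak_solution n (s mu : R) (O : set 'rV[R]_n) (M : R -> R)
    (h : 'rV[R]_n -> R -> R) (u : 'rV[R]_n -> R) : Prop :=
  X0 s O u /\
  forall phi, X0 s O phi ->
    M (powR (X0norm s u) (pexp n s)) *
      rint2 (fun x y =>
        powR `|u x - u y| (pexp n s - 2) * (u x - u y) * (phi x - phi y)
          / enorm (x - y) ^+ (2 * n))
    =
    rint (fun x =>
        indR O x *
        fine (nnint (fun y => indR O y * Gfun s h y (u y) / powR (enorm (x - y)) mu))
        * gfun s h x (u x) * phi x).

End Defs.

(* Main.v *)
Set Warnings "-all".
Require Import Defs.
From HB Require Import structures.
From mathcomp Require Import all_boot all_order all_algebra.
From mathcomp Require Import all_classical all_reals all_analysis measurable_realfun.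
From mathcomp Require Import ring lra.
Import Order.TTheory GRing.Theory Num.Theory.
Import numFieldNormedType.Exports.
Local Open Scope classical_set_scope.
Local Open Scope ring_scope.

Section Good.
Variable R : realType.
Local Notation RR := (measurableTypeR R).

Fixpoint goodset (n : nat) : forall d (T : measurableType d), set (T * 'rV[R]_n) -> Prop :=
  match n with
  | 0 => fun d T A => measurable [set x | A (x, 0)]
  | n'.+1 => fun d T A =>
      @goodset n' _ (T * RR)%type
        [set q | A (q.1.1, row_mx (\row_(j < 1) (q.1.2 : R)) q.2)]
  end.
Arguments goodset {n d T}.

Lemma gs_set0 n : forall d (T : measurableType d), @goodset n d T set0.
Proof.
elim: n => [|n IH] d T /=; first exact: measurable0.
exact: (IH _ (T * RR)%type).
Qed.

Lemma gs_setC n : forall d (T : measurableType d) A, @goodset n d T A -> goodset (~` A).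
Proof.
elim: n => [|n IH] d T A /=.
  by move=> mA; exact: measurableC mA.
exact: (IH _ (T * RR)%type).
Qed.

Lemma gs_bigcup n : forall d (T : measurableType d) (F : (set (T * 'rV[R]_n))^nat),
  (forall k, goodset (F k)) -> goodset (\bigcup_k F k).
Proof.
elim: n => [|n IH] d T F /=.
  move=> mF; have := bigcupT_measurable _ mF.
  by congr measurable; apply/seteqP; split => x /= [k _ h]; exists k.
move=> mF; have := IH _ (T * RR)%type
  (fun k => [set q | F k (q.1.1, row_mx (\row_(j < 1) (q.1.2 : R)) q.2)]) mF.
by congr goodset; apply/seteqP; split => x /= [k _ h]; exists k.
Qed.

Lemma gs_setI n : forall d (T : measurableType d) A B,
  @goodset n d T A -> goodset B -> goodset (A `&` B).
Proof.
elim: n => [|n IH] d T A B /=.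
  by move=> mA mB; exact: measurableI mA mB.
move=> hA hB; exact: (IH _ (T * RR)%type _ _ hA hB).
Qed.

Lemma gs_cyl n : forall d (T : measurableType d) (C : set T),
  measurable C -> @goodset n d T [set p | C p.1].
Proof.
elim: n => [|n IH] d T C mC /=; first by [].
have := IH _ (T * RR)%type (C `*` setT) (measurableX mC measurableT).
by congr goodset; apply/seteqP; split => x /=; [case|].
Qed.


Arguments gs_set0 {n d T}.
Arguments gs_setC {n d T A}.
Arguments gs_bigcup {n d T F}.
Arguments gs_setI {n d T A B}.
Arguments gs_cyl {n d T C}.

Lemma row_mx_box n (a b : 'I_n.+1 -> R) (t : R) (y : 'rV[R]_n) :
  (forall i, a i < (row_mx (\row_(j<1) t) y : 'rV_(1 + n)) ord0 i < b i) <->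
  (a ord0 < t < b ord0 /\ forall j : 'I_n, a (lift ord0 j) < y ord0 j < b (lift ord0 j)).
Proof.
split.
- move=> h; split.
    have := h ord0.
    have -> : (ord0 : 'I_(1 + n)) = lshift n ord0 by apply/val_inj.
    by rewrite row_mxEl mxE.
  move=> j; have := h (lift ord0 j).
  have -> : lift ord0 j = rshift 1 j :> 'I_(1 + n) by apply/val_inj.
  by rewrite row_mxEr.
- case=> h0 h i; case: (@splitP 1 n i) => [k ik|k ik].
    have -> : i = lshift n k by apply/val_inj.
    rewrite row_mxEl mxE (ord1 k).
    have -> : (lshift n ord0 : 'I_(1 + n)) = ord0 by apply/val_inj.
    exact: h0.
  have -> : i = rshift 1 k by apply/val_inj.
  rewrite row_mxEr.
  have -> : (rshift 1 k : 'I_(1 + n)) = lift ord0 k by apply/val_inj.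
  exact: h.
Qed.

Lemma gs_box n : forall d (T : measurableType d) (a b : 'I_n -> R),
  @goodset n d T [set p : T * 'rV[R]_n | forall i, a i < p.2 ord0 i < b i].
Proof.
elim: n => [|n IH] d T a b /=.
  have -> : [set x : T | forall i : 'I_0, a i < (0 : 'rV[R]_0) ord0 i < b i] = setT.
    by apply/seteqP; split => // x _ [].
  exact: measurableT.
have mC : measurable (setT `*` [set` `](a ord0), (b ord0)[ ] : set (T * RR)).
  by apply: measurableX => //; exact: measurable_itv.
have := gs_setI (@gs_cyl n _ _ _ mC) (IH _ (T * RR)%type (fun j => a (lift ord0 j)) (fun j => b (lift ord0 j))).
congr goodset; apply/seteqP; split => q /=.
  by case=> [[_ /=]]; rewrite in_itv /= => h1 h2; apply/row_mx_box; split.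
by move/row_mx_box => [h1 h2]; split => //; split => //=; rewrite in_itv /=.
Qed.


Definition boxq {n} (q : {ffun 'I_n -> rat} * {ffun 'I_n -> rat}) : set 'rV[R]_n :=
  [set y | forall i, ratr (q.1 i) < y ord0 i < ratr (q.2 i)].

Lemma open_boxq n (U : set 'rV[R]_n) y : open U -> U y ->
  exists q, boxq q y /\ boxq q `<=` U.
Proof.
rewrite openE => /[apply] /nbhs_ballP [e /= e0 sU].
have hA i : exists q : rat, ratr q \in `](y ord0 i - e), (y ord0 i)[.
  by apply: rat_in_itvoo; rewrite ltrBlDr ltrDl.
have hB i : exists q : rat, ratr q \in `](y ord0 i), (y ord0 i + e)[.
  by apply: rat_in_itvoo; rewrite ltrDl.
exists ([ffun i => xchoose (hA i)], [ffun i => xchoose (hB i)]); split.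
  move=> i /=; rewrite !ffunE.
  have := xchooseP (hA i); have := xchooseP (hB i).
  by rewrite !in_itv /= => /andP[-> _] /andP[_ ->].
move=> z /= hz; apply: sU.
rewrite mx_norm_ball /=; change (mx_norm (y - z) < e); rewrite mx_normrE; apply/bigmax_ltP; split => // -[i j] _ /=.
rewrite (ord1 i).
have := hz j; rewrite !ffunE.
have := xchooseP (hA j); have := xchooseP (hB j).
rewrite !in_itv /= !mxE => /andP[_ h1] /andP[h2 _] /andP[h3 h4].
rewrite ltr_norml; apply/andP; split; rewrite -?ltrBlDr; lra.
Qed.

Lemma gs_open n d (T : measurableType d) (U : set 'rV[R]_n) :
  open U -> @goodset n d T [set p | U p.2].
Proof.
move=> oU.
pose F (k : nat) : set (T * 'rV[R]_n) :=
  match unpickle k with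
  | Some q => if pselect (boxq q `<=` U) is left _ then [set p | boxq q p.2] else set0
  | None => set0
  end.
have -> : [set p : T * 'rV[R]_n | U p.2] = \bigcup_k F k.
  apply/seteqP; split => p /=.
    move=> Up; have [q [bq sq]] := @open_boxq _ U p.2 oU Up.
    exists (pickle q) => //; rewrite /F pickleK.
    by case: pselect.
  case=> k _; rewrite /F; case: (unpickle k) => [q|] //.
  by case: pselect => // sq /sq.
apply: gs_bigcup => k; rewrite /F; case: (unpickle k) => [q|]; last exact: gs_set0.
case: pselect => _; last exact: gs_set0.
exact: (@gs_box n d T (fun i => ratr (q.1 i)) (fun i => ratr (q.2 i))).
Qed.


Lemma gs_borel n d (T : measurableType d) (A : set 'rV[R]_n) :
  borelRn A -> @goodset n d T [set p | A p.2].
Proof.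
move=> bA.
pose S := [set A : set 'rV[R]_n | @goodset n d T [set p | A p.2]].
suff : <<s [set: 'rV[R]_n], [set U | open U] >> `<=` S by move/(_ _ bA).
apply: smallest_sub.
  split.
  - rewrite /S /=; have -> : [set p : T * 'rV[R]_n | set0 p.2] = set0 by [].
    exact: gs_set0.
  - move=> B hB; rewrite /S /=.
    have -> : [set p : T * 'rV[R]_n | ([set: 'rV[R]_n] `\` B) p.2] = ~` [set p | B p.2].
      by apply/seteqP; split => p /=; [case|split].
    exact: gs_setC.
  - move=> F hF; rewrite /S /=.
    have -> : [set p : T * 'rV[R]_n | (\bigcup_k F k) p.2] = \bigcup_k [set p | F k p.2].
      by apply/seteqP; split => p /= [k _ h]; exists k.
    exact: gs_bigcup.
by move=> U oU; exact: gs_open.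
Qed.

Definition good n d (T : measurableType d) (f : T -> 'rV[R]_n -> \bar R) :=
  forall B : set (\bar R), measurable B -> goodset [set p | B (f p.1 p.2)].
Arguments good {n d T}.

Lemma good_borel n d (T : measurableType d) (v : 'rV[R]_n -> R) (psi : R -> \bar R) :
  borel_fun v -> measurable_fun setT psi -> good (fun (_ : T) y => psi (v y)).
Proof.
move=> bv mpsi B mB.
have := mpsi measurableT B mB; rewrite setTI => mB'.
exact: (@gs_borel n d T _ (bv _ mB')).
Qed.

Lemma iint_ge0 n (f : 'rV[R]_n -> \bar R) : (forall x, (0 <= f x)%E) -> (0 <= iint f)%E.
Proof.
elim: n f => [|n IH] f f0 /=; first exact: f0.
by apply: integral_ge0 => t _; apply: IH.
Qed.

Lemma iint_meas n : forall d (T : measurableType d) (f : T -> 'rV[R]_n -> \bar R),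
  good f -> (forall x y, (0 <= f x y)%E) -> measurable_fun setT (fun x => iint (f x)).
Proof.
elim: n => [|n IH] d T f hf f0 /=.
  by move=> _ B mB; rewrite setTI; exact: (hf B mB).
have := IH _ (T * RR)%type (fun q y => f q.1 (row_mx (\row_(j < 1) (q.2 : R)) y)) hf
  (fun q y => f0 _ _).
move=> mF.
have := @measurable_fun_fubini_tonelli_F _ _ _ _ R (@lebesgue_measure R) _ mF (fun q => @iint_ge0 n _ (fun y => f0 _ _)).
by [].
Qed.


Lemma iint_zero n : forall d (T : measurableType d) (f g : T -> 'rV[R]_n -> \bar R),
  good f -> good g -> (forall x y, (0 <= f x y)%E) -> (forall x y, (0 <= g x y)%E) ->
  (forall x y, f x y = 0%E -> g x y = 0%E) ->
  forall x, iint (f x) = 0%E -> iint (g x) = 0%E.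
Proof.
elim: n => [|n IH] d T f g hf hg f0 g0 fg x /=; first exact: fg.
pose f' (q : T * RR) y := f q.1 (row_mx (\row_(j < 1) (q.2 : R)) y).
pose g' (q : T * RR) y := g q.1 (row_mx (\row_(j < 1) (q.2 : R)) y).
have IH' := IH _ (T * RR)%type f' g' hf hg (fun q y => f0 _ _) (fun q y => g0 _ _)
  (fun q y => fg _ _).
have mF := @iint_meas n _ _ f' hf (fun q y => f0 _ _).
have mG := @iint_meas n _ _ g' hg (fun q y => g0 _ _).
have mFx := measurable_fun_pair2 x mF.
have mGx := measurable_fun_pair2 x mG.
move=> hF.
have : (\int[@lebesgue_measure R]_t `|iint (f' (x, t))| = 0)%E.
  rewrite -[RHS]hF; apply: eq_integral => t _.
  by rewrite gee0_abs //; apply: iint_ge0 => y; exact: f0.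
move/(ae_eq_integral_abs _ measurableT mFx) => aeF.
have aeG : ae_eq (@lebesgue_measure R) setT (fun t => iint (g' (x, t))) (cst 0%E).
  apply: filterS aeF => t h /h /= Ft; exact: IH'.
rewrite (ae_eq_integral (cst 0%E) _ measurableT mGx (measurable_cst _) aeG).
exact: integral0.
Qed.


Lemma int_mono (f g : RR -> \bar R) : (forall x, (0 <= f x)%E) -> (forall x, (f x <= g x)%E) ->
  (\int[@lebesgue_measure R]_x f x <= \int[@lebesgue_measure R]_x g x)%E.
Proof.
move=> f0 fg.
have g0 x : (0 <= g x)%E by apply: le_trans (f0 x) (fg x).
rewrite (ge0_integralTE _ f0) (ge0_integralTE _ g0) /=.
apply: ge_ereal_sup => _ [h hf <-]; apply: ereal_sup_ubound; exists h => //= x.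
exact: le_trans (hf x) (fg x).
Qed.

Lemma iint_le n (f g : 'rV[R]_n -> \bar R) : (forall x, (0 <= f x)%E) ->
  (forall x, (f x <= g x)%E) -> (iint f <= iint g)%E.
Proof.
elim: n f g => [|n IH] f g f0 fg /=; first exact: fg.
apply: int_mono => t; first by apply: iint_ge0 => y; exact: f0.
by apply: IH => y; [exact: f0|exact: fg].
Qed.

Lemma iint_split m k (F : 'rV[R]_(m + k) -> \bar R) :
  iint F = iint (fun x : 'rV[R]_m => iint (fun y : 'rV[R]_k => F (row_mx x y))).
Proof.
elim: m F => [|m IH] F /=.
  suff -> : (fun y : 'rV[R]_k => F (row_mx (0 : 'rV[R]_0) y)) = F by [].
  apply/funext => y; congr F.
  apply/(@rowP _ k) => j.
  have h := row_mxEr (0 : 'rV[R]_0) y 0 j.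
  have e : rshift 0 j = j :> 'I_k by apply/val_inj.
  rewrite e in h; exact: h.
apply: eq_integral => t _.
rewrite (IH (fun w => F (row_mx (\row_(j < 1) t) w))).
congr iint; apply/funext => x; congr iint; apply/funext => y; congr F.
rewrite row_mxA castmx_id //.
Qed.


Lemma row_mx_all n (P : 'I_n.+1 -> R -> Prop) (t : R) (y : 'rV[R]_n) :
  (forall i, P i ((row_mx (\row_(j<1) t) y : 'rV_(1 + n)) ord0 i)) <->
  (P ord0 t /\ forall j : 'I_n, P (lift ord0 j) (y ord0 j)).
Proof.
split.
- move=> h; split.
    have := h ord0.
    have -> : (ord0 : 'I_(1 + n)) = lshift n ord0 by apply/val_inj.
    by rewrite row_mxEl mxE.
  move=> j; have := h (lift ord0 j).
  have -> : lift ord0 j = rshift 1 j :> 'I_(1 + n) by apply/val_inj.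
  by rewrite row_mxEr.
- case=> h0 h i; case: (@splitP 1 n i) => [k ik|k ik].
    have -> : i = lshift n k by apply/val_inj.
    rewrite row_mxEl mxE (ord1 k).
    have -> : (lshift n ord0 : 'I_(1 + n)) = ord0 by apply/val_inj.
    exact: h0.
  have -> : i = rshift 1 k by apply/val_inj.
  rewrite row_mxEr.
  have -> : (rshift 1 k : 'I_(1 + n)) = lift ord0 k by apply/val_inj.
  exact: h.
Qed.

Definition cbox n (a : R) : set 'rV[R]_n := [set y | forall i, a <= y ord0 i <= a + 1].

Definition ind1 (A : set R) (t : R) : R := if `[< A t >] then 1 else 0.

Lemma indR_cbox n a (t : R) (y : 'rV[R]_n) :
  indR (cbox n.+1 a) (row_mx (\row_(j<1) t) y) =
  ind1 [set` `[a, (a + 1)] ] t * indR (cbox n a) y.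
Proof.
rewrite /indR /ind1.
case: asboolP => [/(@row_mx_all n (fun _ z => a <= z <= a + 1)) [h1 h2]|h].
  rewrite asboolT /=; last by rewrite in_itv.
  by rewrite asboolT // mulr1.
case: asboolP => h1; last by rewrite mul0r.
case: asboolP => h2; last by rewrite mulr0.
exfalso; apply: h; apply/(@row_mx_all n (fun _ z => a <= z <= a + 1)); split => //.
Qed.

Lemma iint_box n a (c : R) : 0 <= c ->
  iint (fun y : 'rV[R]_n => (c * indR (cbox n a) y)%:E) = c%:E.
Proof.
elim: n c => [|n IH] c c0 /=.
  by rewrite /indR asboolT ?mulr1 // => -[].
pose I : set R := [set` `[a, (a + 1)] ].
transitivity (\int[@lebesgue_measure R]_t (c * ind1 I t)%:E)%E.
  apply: eq_integral => t _.
  under eq_fun do rewrite indR_cbox mulrA.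
  apply: IH; apply: mulr_ge0 => //; rewrite /ind1; case: asboolP => _ //.
transitivity (\int[@lebesgue_measure R]_(t in I) (cst c%:E) t)%E.
  rewrite [RHS]integral_mkcond; apply: eq_integral => t _.
  rewrite /ind1 patchE; case: asboolP => h.
    by rewrite ifT ?mulr1 // inE.
  by rewrite ifF ?mulr0 //; apply/negbTE; rewrite notin_setE.
rewrite integral_cst; last exact: measurable_itv.
have hI : lebesgue_measure I = 1%E.
  have h := @lebesgue_measure_itv R `[a, (a + 1)].
  rewrite /= lte_fin ltrDl ltr01 -EFinD addrAC subrr add0r in h.
  exact: h.
transitivity (c%:E * 1)%E; last by rewrite mule1.
congr (_ * _)%E; exact: hI.
Qed.


Lemma edot_ge0 n (x : 'rV[R]_n) : 0 <= edot x x.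
Proof. by apply: sumr_ge0 => i _; rewrite -expr2 sqr_ge0. Qed.

Lemma enorm_sq n (x : 'rV[R]_n) : enorm x ^+ 2 = edot x x.
Proof. by rewrite /enorm sqr_sqrtr // edot_ge0. Qed.

Lemma enorm_ge0 n (x : 'rV[R]_n) : 0 <= enorm x.
Proof. exact: sqrtr_ge0. Qed.

Lemma edot_coord n (x : 'rV[R]_n.+1) : x ord0 ord0 ^+ 2 <= edot x x.
Proof.
rewrite /edot (bigD1 ord0) //= -expr2 lerDl.
by apply: sumr_ge0 => i _; rewrite -expr2 sqr_ge0.
Qed.

Lemma edot_sub n (x y : 'rV[R]_n) : edot (x - y) (x - y) <= 2 * edot x x + 2 * edot y y.
Proof.
rewrite /edot !mulr_sumr -big_split /=; apply: ler_sum => i _; rewrite !mxE.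
have := sqr_ge0 (x ord0 i + y ord0 i); rewrite expr2; nra.
Qed.

Lemma edot_box n a (y : 'rV[R]_n) : 0 <= a -> cbox n a y -> edot y y <= n%:R * (a + 1) ^+ 2.
Proof.
move=> a0 hy.
have -> : n%:R * (a + 1) ^+ 2 = \sum_(i < n) (a + 1) ^+ 2.
  by rewrite sumr_const card_ord mulr_natl.
apply: ler_sum => i _; have := hy i => /andP[h1 h2]; nra.
Qed.

Arguments edot_ge0 {n}.
Arguments enorm_sq {n}.
Arguments enorm_ge0 {n}.
Arguments edot_coord {n}.
Arguments edot_sub {n}.
Arguments edot_box {n a y}.

Lemma keyK n (O : set 'rV[R]_n.+1) (v : 'rV[R]_n.+1 -> R) (p : R) :
  0 < p -> Defs.bounded_set O -> borel_fun v -> (forall x, ~ O x -> v x = 0) ->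
  nnint2 (fun x y => powR `|v x - v y| p / enorm (x - y) ^+ (2 * n.+1)) = 0%E ->
  nnint (indR [set y | v y <> 0]) = 0%E.
Proof.
move=> p0 [r hr] bv v0 hG.
pose a : R := `|r| + 1.
have a0 : 0 < a by rewrite /a ltr_wpDl.
have ra : `|r| < a by rewrite /a ltrDl.
pose D0 : R := 2 * r ^+ 2 + 2 * ((n.+1)%:R * (a + 1) ^+ 2).
have D00 : 0 < D0.
  have h1 : 0 <= r ^+ 2 := sqr_ge0 r.
  have h2 : 0 < (n.+1)%:R * (a + 1) ^+ 2.
    by rewrite mulr_gt0 // exprn_gt0 //; lra.
  rewrite /D0; lra.
pose D : R := D0 ^+ n.+1.
have D_gt0 : 0 < D by rewrite exprn_gt0.
pose c : R := D^-1.
have c0 : 0 < c by rewrite invr_gt0.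
pose Phi x y := powR `|v x - v y| p / enorm (x - y) ^+ (2 * n.+1).
have bound x y : (c * powR `|v x| p) * indR (cbox n.+1 a) y <= Num.max (Phi x y) 0.
  rewrite /indR; case: asboolP => hy; last by rewrite mulr0 le_max lexx orbT.
  rewrite mulr1.
  have y0 : a <= y ord0 ord0 by case/andP: (hy ord0).
  have rr := ler_norm r.
  have Oy : ~ O y.
    move/hr => ey.
    have := edot_coord y; rewrite -enorm_sq => hc.
    have e0 := enorm_ge0 y.
    rewrite !expr2 in hc; nra.
  rewrite /Phi (v0 _ Oy) subr0.
  case: (eqVneq (v x) 0) => vx.
    by rewrite vx normr0 powR0 ?gt_eqF // mulr0 mul0r le_max lexx orbT.
  have Ox : O x by case: (pselect (O x)) => // /v0 h; move: vx; rewrite h eqxx.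
  have ex := hr _ Ox.
  have ex0 := enorm_ge0 x.
  have hx : edot x x <= r ^+ 2.
    rewrite -enorm_sq !expr2; nra.
  have hyb : edot y y <= (n.+1)%:R * (a + 1) ^+ 2 by apply: edot_box => //; exact: ltW.
  have hxy := edot_sub x y.
  have hc := edot_coord (x - y); rewrite !mxE in hc.
  have hx0 := edot_coord x; rewrite -enorm_sq in hx0.
  have h' : x ord0 ord0 < y ord0 ord0.
    have : x ord0 ord0 <= enorm x by rewrite !expr2 in hx0; nra.
    lra.
  have hxy0 : 0 < edot (x - y) (x - y).
    apply: lt_le_trans hc; rewrite expr2; nra.
  have E_eq : enorm (x - y) ^+ (2 * n.+1) = edot (x - y) (x - y) ^+ n.+1.
    by rewrite exprM enorm_sq.
  rewrite E_eq le_max; apply/orP; left.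
  rewrite mulrC /c ler_wpM2l ?powR_ge0 // lef_pV2 ?posrE ?exprn_gt0 //.
  apply: lerXn2r; rewrite ?nnegrE ?edot_ge0 ?(ltW D00) //.
  rewrite /D0; lra.
pose f (_ : RR) (y : 'rV[R]_n.+1) := (c * powR `|v y| p)%:E.
pose g (_ : RR) (y : 'rV[R]_n.+1) := (Num.max (indR [set y | v y <> 0] y) 0)%:E.
have mpsi1 : measurable_fun setT (fun t : R => (c * powR `|t| p)%:E).
  apply/measurable_EFinP; apply: measurable_funM; first exact: measurable_cst.
  exact: (measurableT_comp (measurable_powR p) (@normr_measurable R setT)).
have mpsi2 : measurable_fun setT
    (fun t : R => (Num.max (if `[< (t <> 0) >] then (1 : R) else 0) 0)%:E).
  have -> : (fun t : R => (Num.max (if `[< (t <> 0) >] then (1 : R) else 0) 0)%:E)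
      = EFin \o (\1_(~` [set 0]) : R -> R).
    apply/funext => t /=; rewrite indicE; case: asboolP => h.
      by rewrite mem_set // max_l ?ler01.
    by rewrite memNset ?maxxx //= => /(_ (eqP (negbT _))); apply: contra_notP => _ ; move/negP: h.
  apply/measurable_EFinP; apply: measurable_indic; exact: measurableC.
have gf : good f := @good_borel n.+1 _ RR v _ bv mpsi1.
have gg : good g := @good_borel n.+1 _ RR v _ bv mpsi2.
have f0 x y : (0 <= f x y)%E by rewrite lee_fin mulr_ge0 ?powR_ge0 // ltW.
have g0 x y : (0 <= g x y)%E by rewrite lee_fin le_max lexx orbT.
have fg x y : f x y = 0%E -> g x y = 0%E.
  move=> /eqP; rewrite eqe mulf_eq0 gt_eqF //= powR_eq0 => /andP[/eqP h _].
  rewrite /g /indR asboolF ?maxxx // => H; apply: H; apply/eqP.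
  by rewrite -normr_eq0 h.
have hf0 : iint (f 0) = 0%E.
  apply/le_anti/andP; split; last by apply: iint_ge0 => y; exact: f0.
  have e1 : iint (f 0) = iint (fun x : 'rV[R]_n.+1 =>
      iint (fun y : 'rV[R]_n.+1 => ((c * powR `|v x| p) * indR (cbox n.+1 a) y)%:E)).
    congr iint; apply/funext => x; rewrite iint_box //.
    by rewrite mulr_ge0 ?powR_ge0 // ltW.
  rewrite e1.
  have e2 : iint (fun x : 'rV[R]_n.+1 =>
      iint (fun y : 'rV[R]_n.+1 => ((c * powR `|v x| p) * indR (cbox n.+1 a) y)%:E)) =
    iint (fun z : 'rV[R]_(n.+1 + n.+1) =>
      ((c * powR `|v (lsubmx z)| p) * indR (cbox n.+1 a) (rsubmx z))%:E).
    rewrite [RHS](@iint_split n.+1 n.+1); apply: congr1; apply/funext => x.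
    by apply: congr1; apply/funext => y; rewrite row_mxKl row_mxKr.
  rewrite e2 -hG /nnint2 /nnint.
  have ind0 y : 0 <= indR (cbox n.+1 a) y by rewrite /indR; case: asboolP.
  apply: iint_le => z; first by rewrite lee_fin !mulr_ge0 ?powR_ge0 ?ind0 ?(ltW c0).
  rewrite lee_fin; exact: bound.
exact: (@iint_zero n.+1 _ RR f g gf gg f0 g0 fg 0 hf0).
Qed.





Lemma powR_id (x q : R) : 0 <= q -> powR `|x| q * (x * x) = powR `|x| (q + 2).
Proof.
move=> q0.
case: (eqVneq x 0) => [->|x0].
  have h2 : q + 2 != 0 by apply/negP => /eqP; lra.
  by rewrite !mulr0 normr0 powR0.
rewrite powRD; last by rewrite normr_eq0 x0 implybT.
congr (_ * _); rewrite powR_mulrn ?normr_ge0 //.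
by rewrite real_normK ?num_real // expr2.
Qed.

Lemma F_bounds (ux uy p E : R) : 2 <= p -> 0 <= E ->
  let A := ux - uy in let B := Num.min ux 0 - Num.min uy 0 in
  powR `|B| p / E <= powR `|A| (p - 2) * A * B / E /\
  powR `|A| (p - 2) * A * B / E <= powR `|A| p / E.
Proof.
move=> p2 E0 A B.
have hAB : B * B <= A * B /\ A * B <= A * A.
  have := sqr_ge0 (ux - uy); rewrite expr2 => hs.
  rewrite /A /B; have [hx|hx] := leP ux 0; have [hy|hy] := leP uy 0; split; nra.
case: hAB => h1 h2.
have q0 : 0 <= p - 2 by lra.
have hp : p = p - 2 + 2 by rewrite subrK.
have nBA : `|B| <= `|A|.
  rewrite -(ler_pXn2r (n := 2)) ?nnegrE ?normr_ge0 //.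
  rewrite !real_normK ?num_real // !expr2; lra.
have PA0 : 0 <= powR `|A| (p - 2) := powR_ge0 _ _.
have iE : 0 <= E^-1 by rewrite invr_ge0.
split; apply: ler_wpM2r => //.
  rewrite [in X in X <= _]hp -powR_id // -mulrA.
  apply: le_trans (ler_wpM2l PA0 h1).
  apply: ler_wpM2r; first by rewrite -expr2 sqr_ge0.
  by apply: ge0_ler_powR; rewrite ?nnegrE ?normr_ge0.
rewrite [in X in _ <= X]hp -powR_id // -mulrA.
by apply: ler_wpM2l.
Qed.


Lemma iint_cst0 n : iint (fun _ : 'rV[R]_n => 0%E) = 0%E.
Proof.
elim: n => [|n IH] //=.
under eq_integral do rewrite IH.
exact: integral0.
Qed.

End Good.

Theorem lemma3p9 (R : realType) (n : nat) (s mu gam l : R)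
    (Omega : set 'rV[R]_n) (M : R -> R) (h : 'rV[R]_n -> R -> R)
    (u : 'rV[R]_n -> R) :
  (1 <= n)%N -> 0 < s < 1 -> 2 <= pexp n s ->
  bounded_lipschitz_domain Omega ->
  0 < mu < n%:R ->
  M_basic M -> M1 M -> M2 M gam -> M3 M ->
  g1 Omega h -> g2 s Omega h -> g3 s Omega h ->
  l > gam * n%:R / (2 * s) - 1 -> g4 s Omega h l ->
  weak_solution s mu Omega M h u ->
  nnint (fun x => indR (fun y => u y <> 0) x) <> 0%E ->
  nnint (fun x => indR (fun y => Omega y /\ u y < 0) x) = 0%E.
Proof.
case: n Omega h u => [//|n] Omega h u _ /andP[s0 s1] p2 [_ [_ [_ [bO _]]]] _ _ _ _ M3h
  [_ [g1neg _]] _ _ _ _ [[bu [u0 [uLp ugag]]] hweak] hnz.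
set p := pexp n.+1 s in p2 uLp ugag hweak *.
have p0 : 0 < p by lra.
pose phi x := Num.min (u x) 0.
have bphi : borel_fun phi.
  move=> B mB.
  have := measurable_minr (@measurable_id _ R setT) (measurable_cst (0 : R)) measurableT mB.
  rewrite setTI => h1; exact: (bu _ h1).
have phi0 x : ~ Omega x -> phi x = 0 by move/u0; rewrite /phi => ->; rewrite minxx.
have nphi x : `|phi x| <= `|u x|.
  by rewrite /phi; have [hx|hx] := leP (u x) 0; rewrite ?normr0 ?normr_ge0.
have dphi x y : `|phi x - phi y| <= `|u x - u y|.
  rewrite -(ler_pXn2r (n := 2)) ?nnegrE ?normr_ge0 // !real_normK ?num_real // !expr2.
  have := sqr_ge0 (u x - u y); rewrite expr2 => hs.
  by rewrite /phi; have [hx|hx] := leP (u x) 0; have [hy|hy] := leP (u y) 0; nra.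
have E0 (x y : 'rV[R]_n.+1) : 0 <= enorm (x - y) ^+ (2 * n.+1) by rewrite exprn_ge0 // enorm_ge0.
have Xphi : X0 s Omega phi.
  split => //; split => //; split.
    apply: le_lt_trans uLp; rewrite /nnint; apply: iint_le => x.
      by rewrite lee_fin le_max lexx orbT.
    rewrite lee_fin !max_l ?powR_ge0 //; apply: ge0_ler_powR; rewrite ?nnegrE ?normr_ge0 //.
    exact: ltW.
  apply: le_lt_trans ugag; rewrite /gagliardo /nnint2 /nnint; apply: iint_le => z.
    by rewrite lee_fin le_max lexx orbT.
  rewrite lee_fin !max_l ?divr_ge0 ?powR_ge0 //; apply: ler_wpM2r; first by rewrite invr_ge0.
  by apply: ge0_ler_powR; rewrite ?nnegrE ?normr_ge0 // ltW.
have heq := hweak phi Xphi.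
rewrite [X in _ = rint X](_ : _ = fun _ => 0) in heq; last first.
  apply/funext => x; rewrite /indR; case: asboolP => Ox; last by rewrite !mul0r.
  rewrite mul1r; have [hx|hx] := leP 0 (u x).
    by rewrite /phi min_r // mulr0.
  rewrite /gfun g1neg ?mul0r ?mulr0 // ?mul0r //; [exact: (@subset_closure _ Omega x Ox) | exact: ltW].
have rint0 : rint (fun _ : 'rV[R]_n.+1 => 0) = 0.
  rewrite /rint /nnint oppr0 maxxx.
  have -> : (fun=> (0 : R)%:E) = (fun _ : 'rV[R]_n.+1 => 0%E) by [].
  by rewrite iint_cst0 sube0.
rewrite rint0 in heq.
pose Fz (x y : 'rV[R]_n.+1) := powR `|u x - u y| (p - 2) * (u x - u y) * (phi x - phi y)
  / enorm (x - y) ^+ (2 * n.+1).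
pose Gu (x y : 'rV[R]_n.+1) := powR `|u x - u y| p / enorm (x - y) ^+ (2 * n.+1).
pose Gp (x y : 'rV[R]_n.+1) := powR `|phi x - phi y| p / enorm (x - y) ^+ (2 * n.+1).
have Fb x y : Gp x y <= Fz x y /\ Fz x y <= Gu x y := @F_bounds R (u x) (u y) p (enorm (x - y) ^+ (2 * n.+1)) p2 (E0 x y).
have Gp0 x y : 0 <= Gp x y := divr_ge0 (powR_ge0 _ _) (E0 x y).
have Fz0 x y : 0 <= Fz x y := le_trans (Gp0 x y) (Fb x y).1.
have nF : (nnint2 Fz <= gagliardo s u)%E.
  rewrite /gagliardo /nnint2 /nnint; apply: iint_le => z.
    by rewrite lee_fin le_max lexx orbT.
  rewrite lee_fin (max_l (Fz0 _ _)) max_l ?divr_ge0 ?powR_ge0 ?E0 //; exact: (Fb _ _).2.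
have nF0 : (0 <= nnint2 Fz)%E by apply: iint_ge0 => z; rewrite lee_fin le_max lexx orbT.
have nN : nnint (fun z : 'rV[R]_(n.+1 + n.+1) => - Fz (lsubmx z) (rsubmx z)) = 0%E.
  rewrite /nnint.
  have -> : (fun z : 'rV[R]_(n.+1 + n.+1) => (Num.max (- Fz (lsubmx z) (rsubmx z)) 0)%:E)
      = (fun _ => 0%E).
    by apply/funext => z; rewrite max_r // oppr_le0 Fz0.
  exact: iint_cst0.
have r2 : rint2 Fz = fine (nnint2 Fz) by rewrite /rint2 /rint nN sube0.
have gu_ge0 : (0 <= gagliardo s u)%E by apply: iint_ge0 => z; rewrite lee_fin le_max lexx orbT.
have gu_ne0 : gagliardo s u != 0%E.
  apply/eqP => g0; apply: hnz; exact: (@keyK R n Omega u p p0 bO bu u0 g0).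
have fgu : 0 < fine (gagliardo s u).
  apply: fine_gt0; rewrite ugag andbT lt_neqAle eq_sym gu_ne0 gu_ge0 //.
have X0n : 0 < X0norm s u by rewrite /X0norm powR_gt0.
have b0 : 0 < powR (X0norm s u) p by rewrite powR_gt0.
have [kap [kap0 hk]] := M3h _ b0.
have mpos := lt_le_trans kap0 (hk _ (lexx _)).
move: heq; rewrite -/(Fz) r2 => /eqP; rewrite mulf_eq0 gt_eqF //= => /eqP hF.
have hF' : nnint2 Fz = 0%E.
  have finF : nnint2 Fz \is a fin_num by rewrite ge0_fin_numE // (le_lt_trans nF ugag).
  by rewrite -(fineK finF) hF.
have gphi : gagliardo s phi = 0%E.
  apply/le_anti/andP; split; last by apply: iint_ge0 => z; rewrite lee_fin le_max lexx orbT.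
  rewrite -hF' /gagliardo /nnint2 /nnint; apply: iint_le => z.
    by rewrite lee_fin le_max lexx orbT.
  rewrite lee_fin !max_l ?Gp0 ?Fz0 //; exact: (Fb _ _).1.
have := @keyK R n Omega phi p p0 bO bphi phi0 gphi.
have -> : (fun y => Omega y /\ u y < 0) = [set y | phi y <> 0].
  apply/funext => y; apply/propext; split.
    case=> Oy uy; rewrite /phi /= min_l ?ltW // => h0.
    by move: uy; rewrite h0 ltxx.
  rewrite /= /phi => hp.
  have uy : u y < 0.
    case: (leP 0 (u y)) => // hx.
    by exfalso; apply: hp; rewrite min_r.
  split => //; case: (pselect (Omega y)) => // /u0 h0.
  by move: uy; rewrite h0 ltxx.
by [].
Qed.
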